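(* Let $n \geq 2$ and $r$ be positive integers. Let $u$ and $z$ be complex numbers with $w = z/u = e^{i\varphi}$ where $0 < \varphi < \pi$, and let $\sqrt{w} = e^{i\varphi/2}$. Then \[ \left|X_{n,r}^{*}(z,u)\right| \leq 4|u|^{r}\frac{\Gamma(1-1/n)\, r!}{\Gamma(r+1-1/n)}\left|1+\sqrt{w}\right|^{2r-2} \] and \[ \left|X_{n,r}^{*}(u,z)\right| \leq 4|z|^{r}\frac{\Gamma(1-1/n)\, r!}{\Gamma(r+1-1/n)}\left|1+\sqrt{w}\right|^{2r-2}. \]
   Context: $X_{n,r}(X) = {}_{2}F_{1}(-r,-r-1/n;1-1/n;X) = \sum_{s=0}^{r}\frac{(-r)_{s}(-r-1/n)_{s}}{(1-1/n)_{s}\,s!}X^{s}$ with $(y)_{s} = y(y+1)\cdots(y+s-1)$, and $X_{n,r}^{*}(X,Y) = Y^{r}X_{n,r}(X/Y)$. *)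

(* Defs.v *)
From Stdlib Require Import Reals Factorial.
From Coquelicot Require Import Coquelicot.
Open Scope C_scope.

Fixpoint poch (y : C) (s : nat) : C :=
  match s with
  | O => 1
  | S s' => poch y s' * (y + RtoC (INR s'))
  end.

(* X_{n,r}(X) = 2F1(-r, -r-1/n; 1-1/n; X)
   = sum_{s=0}^r (-r)_s (-r-1/n)_s / ((1-1/n)_s s!) X^s *)
Definition Xnr (n r : nat) (X : C) : C :=
  sum_n (fun s =>
    poch (- RtoC (INR r)) s * poch (- RtoC (INR r) - RtoC (1 / INR n)) s
    / (poch (1 - RtoC (1 / INR n)) s * RtoC (INR (fact s))) * X ^ s) r.

Definition Xstar (n r : nat) (X Y : C) : C := Y ^ r * Xnr n r (X / Y).

Definition expi (phi : R) : C := (cos phi, sin phi).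

(* Gamma(1-1/n) r! / Gamma(r+1-1/n) = r! / (1-1/n)_r, using the functional
   equation Gamma(a+r) = (a)_r Gamma(a) with a = 1-1/n > 0. *)
Fixpoint rpoch (y : R) (s : nat) : R :=
  match s with
  | O => 1%R
  | S s' => (rpoch y s' * (y + INR s'))%R
  end.

Definition gamma_ratio (n r : nat) : R :=
  (INR (fact r) / rpoch (1 - 1 / INR n) r)%R.

(* Main.v *)
Require Import Defs.
From Stdlib Require Import Reals Lra Lia Psatz.
From Coquelicot Require Import Coquelicot.
From HB Require structures.
From mathcomp Require all_boot all_order all_algebra ring lra.
From mathcomp.real_closed Require complex.
From mathcomp.reals_stdlib Require Rstruct.

Module Core.
From HB Require Import structures.
From mathcomp Require Import all_boot all_order all_algebra ring lra.
From mathcomp.real_closed Require Import complex.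
From mathcomp.reals_stdlib Require Import Rstruct.
Import Order.TTheory GRing.Theory Num.Theory.
Local Open Scope ring_scope.
Local Open Scope complex_scope.
Set Implicit Arguments. Unset Strict Implicit. Unset Printing Implicit Defensive.

Section Gen.
Variable K : numFieldType.

Fixpoint gb (x : K) (k : nat) : K :=
  if k is k'.+1 then gb x k' * (x - k'%:R) / k'.+1%:R else 1.

Lemma gbS x k : gb x k.+1 = gb x k * (x - k%:R) / k.+1%:R. Proof. by []. Qed.
Lemma gb0 x : gb x 0 = 1. Proof. by []. Qed.
Arguments gb : simpl never.

Lemma gbS' x k : k.+1%:R * gb x k.+1 = (x - k%:R) * gb x k.
Proof.
by rewrite gbS mulrC divfK ?pnatr_eq0 // mulrC.
Qed.

Lemma vdm x y n : \sum_(i < n.+1) gb x i * gb y (n - i) = gb (x + y) n.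
Proof.
elim: n => [|n IH]; first by rewrite big_ord1 !gb0 mulr1.
apply: (@mulfI _ (n.+1%:R)); first by rewrite pnatr_eq0.
have -> : n.+1%:R * gb (x + y) n.+1 = (x + y - n%:R) * gb (x + y) n by apply: gbS'.
rewrite -IH big_distrr big_distrr /=.
transitivity (\sum_(i < n.+2) (i%:R * (gb x i * gb y (n.+1 - i))
      + (n.+1 - i)%:R * (gb x i * gb y (n.+1 - i)))).
  apply: eq_bigr => i _; rewrite -mulrDl -natrD subnKC //; exact: ltnSE (ltn_ord i).
rewrite big_split /= [X in X + _]big_ord_recl [X in _ + X]big_ord_recr /=.
rewrite mul0r add0r subnn mul0r addr0 -big_split /=; apply: eq_bigr => i _.
rewrite /bump /= add1n subSS.
have hi : (i <= n)%N by exact: ltnSE (ltn_ord i).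
rewrite subSn // mulrA gbS' mulrCA gbS' natrB //; ring.
Qed.

Lemma gb_pascal x k : gb (x + 1) k.+1 = gb x k.+1 + gb x k.
Proof.
elim: k => [|k IH]; first by rewrite !gbS !gb0 !mul1r !subr0 !divr1 addrC.
have h2 : (k.+2%:R : K) != 0 by rewrite pnatr_eq0.
have h1 : (k.+1%:R : K) != 0 by rewrite pnatr_eq0.
rewrite [gb (x+1) k.+2]gbS IH [gb x k.+2]gbS.
rewrite !gbS; field.
by rewrite -[1 + _]/(1%:R + k%:R) -!natrD !pnatr_eq0.
Qed.

Lemma gb0n k : gb 0 k.+1 = 0.
Proof.
elim: k => [|k IH]; first by rewrite gbS gb0 subrr mulr0 mul0r.
by rewrite gbS IH !mul0r.
Qed.

Lemma gb11 : gb 1 1 = 1.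
Proof. by rewrite gbS gb0 subr0 !mul1r invr1. Qed.

Lemma gb1n k : gb 1 k.+2 = 0.
Proof.
elim: k => [|k IH]; last by rewrite gbS IH !mul0r.
by rewrite gbS gb11 subrr mulr0 mul0r.
Qed.

Definition eqt (M : nat) (p q : {poly K}) := forall i, (i < M)%N -> p`_i = q`_i.

Lemma eqt_sym M p q : eqt M p q -> eqt M q p.
Proof. by move=> h i hi; rewrite h. Qed.

Lemma eqt_trans M p q s : eqt M p q -> eqt M q s -> eqt M p s.
Proof. by move=> h1 h2 i hi; rewrite h1 ?h2. Qed.

Lemma eqt_mul M p p' q q' : eqt M p p' -> eqt M q q' -> eqt M (p * q) (p' * q').
Proof.
move=> hp hq k kM; rewrite !coefM; apply: eq_bigr => i _.
rewrite hp ?hq //; first exact: leq_ltn_trans (leq_subr i k) kM.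
exact: leq_ltn_trans (leq_ord i) kM.
Qed.

Definition bp (x c : K) M : {poly K} := \poly_(i < M) (gb x i * c ^+ i).

Lemma bp_add M x y c : eqt M (bp x c M * bp y c M) (bp (x + y) c M).
Proof.
move=> k kM; rewrite coefM coef_poly kM -vdm big_distrl; apply: eq_bigr => i _ /=.
have iM : (i < M)%N by exact: leq_ltn_trans (leq_ord i) kM.
have kiM : (k - i < M)%N by exact: leq_ltn_trans (leq_subr i k) kM.
have e : c ^+ k = c ^+ i * c ^+ (k - i).
  by rewrite -exprD subnKC //; exact: leq_ord i.
rewrite !coef_poly iM kiM e; ring.
Qed.

Lemma bp0 M c : eqt M (bp 0 c M) 1.
Proof.
move=> [|k] kM; rewrite coef_poly kM coef1 //= ?gb0n ?mul0r //.
by rewrite gb0 expr0 mulr1.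
Qed.

Lemma bp1 M c : eqt M (bp 1 c M) (1 + c *: 'X).
Proof.
move=> [|[|k]] kM; rewrite coef_poly kM coefD coef1 coefZ coefX /=.
- by rewrite gb0 expr0 mulr1 mulr0 addr0.
- by rewrite gb11 expr1 mulr1 mul1r add0r.
- by rewrite gb1n mul0r mulr0 addr0.
Qed.

Lemma bp_nat M n c : eqt M (bp n%:R c M) ((1 + c *: 'X) ^+ n).
Proof.
elim: n => [|n IH]; first by rewrite expr0; apply: bp0.
rewrite exprSr mulrSr => i hi.
by rewrite -(@bp_add M n%:R 1 c i hi) (eqt_mul IH (@bp1 M c)).
Qed.

Implicit Types p q : {poly K}.
Definition Nrm (p : {poly K}) : K := \sum_(i < size p) `|p`_i|.

Lemma NrmE p m : (size p <= m)%N -> Nrm p = \sum_(i < m) `|p`_i|.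
Proof.
move=> hm; rewrite /Nrm (big_ord_widen m (fun i : nat => `|(p : {poly K})`_i|)) // big_mkcond /=.
apply: eq_bigr => i _; case: ifP => // /negbT; rewrite -leqNgt => h.
by rewrite nth_default // normr0.
Qed.

Lemma Nrm_ge0 p : 0 <= Nrm p.
Proof. by apply: sumr_ge0 => i _; rewrite normr_ge0. Qed.

Lemma sum_le_Nrm p m : \sum_(i < m) `|p`_i| <= Nrm p.
Proof.
rewrite (NrmE (leq_maxr m (size p))) (big_ord_widen (maxn m (size p)) (fun i : nat => `|(p : {poly K})`_i|)) ?leq_maxl //.
rewrite [leRHS](bigID (fun i : 'I_ _ => (i < m)%N)) /= lerDl.
by apply: sumr_ge0 => i _; rewrite normr_ge0.
Qed.

Lemma Nrm0 : Nrm 0 = 0.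
Proof. by rewrite /Nrm size_poly0 big_ord0. Qed.

Lemma Nrm_add p q : Nrm (p + q) <= Nrm p + Nrm q.
Proof.
set m := maxn (size p) (size q).
rewrite (NrmE (size_add p q)) (NrmE (leq_maxl (size p) (size q))) (NrmE (leq_maxr (size p) (size q))).
rewrite -big_split /=; apply: ler_sum => i _; rewrite coefD; exact: ler_normD.
Qed.

Lemma Nrm_scale c q : Nrm (c *: q) = `|c| * Nrm q.
Proof.
rewrite (NrmE (size_scale_leq c q)) /Nrm big_distrr /=.
by apply: eq_bigr => i _; rewrite coefZ normrM.
Qed.

Lemma Nrm_MXadd q c : Nrm (q * 'X + c%:P) = Nrm q + `|c|.
Proof.
have hs : (size (q * 'X + c%:P)%R <= (size q).+1)%N.
  apply: leq_trans (size_add _ _) _; rewrite geq_max; apply/andP; split.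
    by apply: leq_trans (size_mul_leq _ _) _; rewrite size_polyX addn2.
  by apply: leq_trans (size_polyC_leq1 c) _.
rewrite (NrmE hs) big_ord_recl /= coefD coefMX coefC /= add0r addrC.
congr (_ + _); apply: eq_bigr => i _.
by rewrite coefD coefMX coefC /bump /= addr0.
Qed.

Lemma Nrm_mulX q : Nrm (q * 'X) = Nrm q.
Proof. by have := Nrm_MXadd q 0; rewrite polyC0 addr0 normr0 addr0. Qed.

Lemma Nrm_mul p q : Nrm (p * q) <= Nrm p * Nrm q.
Proof.
elim/poly_ind: p => [|p c IH]; first by rewrite mul0r Nrm0 mul0r.
rewrite Nrm_MXadd mulrDl mulrAC mul_polyC.
apply: le_trans (Nrm_add _ _) _; rewrite Nrm_mulX Nrm_scale mulrDl.
by apply: lerD => //; rewrite mulrC.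
Qed.

Lemma Nrm1 : Nrm 1 = 1.
Proof. by rewrite /Nrm size_poly1 big_ord1 coef1 normr1. Qed.

Lemma Nrm_exp p n : Nrm (p ^+ n) <= Nrm p ^+ n.
Proof.
elim: n => [|n IH]; first by rewrite !expr0 Nrm1.
rewrite !exprS; apply: le_trans (Nrm_mul _ _) _.
by apply: ler_pM => //; rewrite ?Nrm_ge0.
Qed.
End Gen.
Arguments gb {K} x k : simpl never.

Section Real.
Variable F : realFieldType.
Variable a : F.
Hypothesis a0 : 0 < a.
Hypothesis a1 : a < 1.

Lemma norm_gbS (x : F) m : `|gb x m.+1| = `|gb x m| * `|x - m%:R| / m.+1%:R.
Proof. by rewrite gbS normrM normrM normfV normr_nat. Qed.

Lemma gb_1ma m : `|gb (1 - a) m| <= 1.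
Proof.
have ha0 := a0; have ha1 := a1.
elim: m => [|m IH]; first by rewrite gb0 normr1.
rewrite norm_gbS.
have hm : `|1 - a - m%:R| <= m.+1%:R.
  have m0 : (0 : F) <= m%:R by rewrite ler0n.
  rewrite ler_norml mulrSr; apply/andP; split; lra.
have p : (0 : F) < m.+1%:R by rewrite ltr0n.
rewrite ler_pdivrMr // mul1r; rewrite -[m.+1%:R]mul1r.
by apply: ler_pM => //; rewrite normr_ge0.
Qed.

Definition ee i := `|gb (a - 1) i|.

Lemma ee_ge0 i : 0 <= ee i.
Proof. exact: normr_ge0. Qed.

Lemma eeS i : ee i.+1 = ee i * (i.+1%:R - a) / i.+1%:R.
Proof.
have ha0 := a0; have ha1 := a1.
rewrite /ee norm_gbS; congr (_ * _ / _).
have m0 : (0 : F) <= i%:R by rewrite ler0n.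
rewrite ler0_norm; last by lra.
rewrite mulrSr; lra.
Qed.

Lemma gb_aS i : `|gb a i.+1| = ee i * a / i.+1%:R.
Proof.
have ha0 := a0; have ha1 := a1.
elim: i => [|i IH].
  by rewrite norm_gbS /ee !gb0 normr1 subr0 gtr0_norm.
rewrite norm_gbS IH eeS.
have m0 : (0 : F) <= i%:R by rewrite ler0n.
rewrite ler0_norm; last by rewrite mulrSr; lra.
have h1 : (i.+1%:R : F) != 0 by rewrite pnatr_eq0.
have h2 : (i.+2%:R : F) != 0 by rewrite pnatr_eq0.
field.
by rewrite -[1 + _]/(1%:R + i%:R) -!natrD !pnatr_eq0.
Qed.

Lemma sum_gb_a i : \sum_(j < i.+1) `|gb a j| = 2 - ee i.
Proof.
have ha0 := a0; have ha1 := a1.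
elim: i => [|i IH]; first by rewrite big_ord1 gb0 normr1 /ee gb0 normr1; lra.
rewrite big_ord_recr /= IH gb_aS eeS.
have h1 : (i.+1%:R : F) != 0 by rewrite pnatr_eq0.
field.
by rewrite -[1 + _]/(1%:R + i%:R) -!natrD !pnatr_eq0.
Qed.

Lemma sum_gb_a_le i : \sum_(j < i) `|gb a j| <= 2.
Proof.
have ha0 := a0; have ha1 := a1.
case: i => [|i]; first by rewrite big_ord0; lra.
by rewrite sum_gb_a; have := ee_ge0 i; lra.
Qed.

Lemma sum_gb_1pa i : \sum_(j < i.+1) `|gb (1 + a) j| <= 4.
Proof.
have ha0 := a0; have ha1 := a1.
rewrite big_ord_recl gb0 normr1.
apply: le_trans (_ : 1 + \sum_(j < i) (`|gb a j.+1| + `|gb a j|) <= 4).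
  rewrite lerD2l; apply: ler_sum => j _; rewrite /bump /= addrC gb_pascal.
  exact: ler_normD.
rewrite big_split /= addrA.
have -> : 1 + \sum_(j < i) `|gb a j.+1| = \sum_(j < i.+1) `|gb a j|.
  by rewrite big_ord_recl gb0 normr1.
have := sum_gb_a_le i.+1; have := sum_gb_a_le i; lra.
Qed.
End Real.

Section Coef.
Variable K : numFieldType.

Fixpoint rf (y : K) (s : nat) : K := if s is s'.+1 then rf y s' * (y + s'%:R) else 1.
Fixpoint ff (y : K) (s : nat) : K := if s is s'.+1 then ff y s' * (y - s'%:R) else 1.
Lemma rfS y s : rf y s.+1 = rf y s * (y + s%:R). Proof. by []. Qed.
Lemma ffS y s : ff y s.+1 = ff y s * (y - s%:R). Proof. by []. Qed.
Lemma rf0 y : rf y 0 = 1. Proof. by []. Qed.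
Lemma ff0 y : ff y 0 = 1. Proof. by []. Qed.

Lemma rf_neg y s : rf (- y) s = (-1) ^+ s * ff y s.
Proof. elim: s => [|s IH]; first by rewrite rf0 ff0 expr0 mulr1.
by rewrite rfS ffS IH exprS; ring. Qed.

Lemma fact_neq0 s : (s`!%:R : K) != 0.
Proof. by rewrite pnatr_eq0 -lt0n fact_gt0. Qed.

Lemma gb_ff y s : gb y s = ff y s / s`!%:R.
Proof.
elim: s => [|s IH]; first by rewrite gb0 ff0 fact0 divr1.
rewrite gbS IH ffS factS natrM.
have := fact_neq0 s; have h : (s.+1%:R : K) != 0 by rewrite pnatr_eq0.
move=> h2; field. by rewrite h2 -[1 + _]/(1%:R + s%:R) -natrD pnatr_eq0.
Qed.

Lemma ff_nat n s : ff n%:R s = (n ^_ s)%:R.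
Proof.
elim: s => [|s IH]; first by rewrite ff0 ffactn0.
rewrite ffS IH ffactnSr.
case: (leqP s n) => h; first by rewrite natrM natrB.
by rewrite ffact_small // !mul0r.
Qed.

Lemma ff_fact n s : (s <= n)%N -> ff n%:R s * (n - s)`!%:R = n`!%:R.
Proof. by move=> h; rewrite ff_nat -natrM ffact_fact. Qed.

Lemma ffSl z t : ff z t.+1 = z * ff (z - 1) t.
Proof.
elim: t => [|t IH]; first by rewrite ffS ff0 !mul1r mulr1 subr0.
by rewrite ffS IH ffS mulrSr; ring.
Qed.

Lemma ff_rf y t : ff (y + t%:R) t = rf (y + 1) t.
Proof.
elim: t => [|t IH]; first by rewrite ff0 rf0.
rewrite ffSl rfS -IH.
have -> : y + t.+1%:R - 1 = y + t%:R by rewrite mulrSr; ring.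
rewrite mulrSr; ring.
Qed.

Lemma rf_add y s t : rf y (s + t) = rf y s * rf (y + s%:R) t.
Proof.
elim: t => [|t IH]; first by rewrite addn0 rf0 mulr1.
by rewrite addnS !rfS IH natrD; ring.
Qed.

Lemma rf_gt0 y s : 0 < y -> 0 < rf y s.
Proof.
move=> hy; elim: s => [|s IH]; first by rewrite rf0.
by rewrite rfS mulr_gt0 // ltr_wpDr ?ler0n.
Qed.

Lemma coef_id (a : K) r s : 0 < 1 - a -> (s <= r)%N ->
  rf (- r%:R) s * rf (- r%:R - a) s / (rf (1 - a) s * s`!%:R)
  = (r`!%:R / rf (1 - a) r) * gb (r%:R + a) s * gb (r%:R - a) (r - s).
Proof.
move=> ha hs.
rewrite -opprD !rf_neg !gb_ff.
have e1 : r%:R - a = (s%:R - a) + (r - s)%:R :> K by rewrite natrB //; ring.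
rewrite e1 ff_rf.
have e3 : rf (1 - a) r = rf (1 - a) s * rf (1 - a + s%:R) (r - s).
  by rewrite -rf_add subnKC.
rewrite e3.
have e2 : 1 - a + s%:R = s%:R - a + 1 :> K by ring.
rewrite e2 -(ff_fact hs).
have hP := rf_gt0 s ha.
have hQ : 0 < rf (s%:R - a + 1) (r - s).
  by apply: rf_gt0; rewrite -e2 ltr_wpDr ?ler0n.
have hF1 := fact_neq0 s; have hF2 := fact_neq0 (r - s).
move: hP hQ hF1 hF2.
set P := rf (1 - a) s; set Q := rf _ (r - s); set A := ff _ s; set B := ff _ s.
set F1 := (s`!)%:R; set F2 := ((r - s)`!)%:R.
move=> hP hQ hF1 hF2.
have hm : (-1) ^+ s * (-1) ^+ s = 1 :> K by rewrite -exprMn mulrNN mulr1 expr1n.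
transitivity (((-1) ^+ s * (-1) ^+ s) * (B * A / (P * F1))); first by ring.
rewrite hm mul1r; field.
by rewrite !fact_neq0 (gt_eqF hQ) (gt_eqF hP).
Qed.
End Coef.
Arguments rf {K} y s : simpl never.
Arguments ff {K} y s : simpl never.

Section Core.
Variables (F : realFieldType) (K : numFieldType) (f : {rmorphism F -> K}).
Hypothesis f_norm : forall x, `|f x| = f `|x|.
Hypothesis f_le : forall x y, x <= y -> f x <= f y.

Lemma gb_f x k : gb (f x) k = f (gb x k).
Proof.
elim: k => [|k IH]; first by rewrite !gb0 rmorph1.
by rewrite !gbS IH !rmorphM fmorphV rmorphB !rmorph_nat.
Qed.

Lemma NrmQ (w : K) : `|w| = 1 -> Nrm ((1 + w *: 'X) * (1 + 1 *: 'X)) = 2 + `|1 + w|.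
Proof.
move=> w1.
have -> : (1 + w *: 'X) * (1 + 1 *: 'X) =
   ((0 * 'X + w%:P) * 'X + (1 + w)%:P) * 'X + 1%:P.
  rewrite -!mul_polyC polyCD !polyC1; ring.
rewrite !Nrm_MXadd Nrm0 normr1 add0r w1.
rewrite (_ : 2 = 1 + 1) //; ring.
Qed.

Lemma core (a : F) (w : K) r : 0 < a -> a < 1 -> (1 <= r)%N -> `|w| = 1 ->
  `|\sum_(s < r.+1) gb (r%:R + f a) s * w ^+ s * gb (r%:R - f a) (r - s)|
    <= 4 * (2 + `|1 + w|) ^+ r.-1.
Proof.
move=> a0 a1 r1 w1.
set n := r.-1.
have rn : r = n.+1 by rewrite /n prednK.
set M := r.+1.
set H := bp (1 + f a) w M * bp (1 - f a) 1 M.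
set V := bp n%:R w M * bp n%:R 1 M.
have eS : \sum_(s < r.+1) gb (r%:R + f a) s * w ^+ s * gb (r%:R - f a) (r - s)
    = (V * H)`_r.
  have e1 : \sum_(s < r.+1) gb (r%:R + f a) s * w ^+ s * gb (r%:R - f a) (r - s)
     = (bp (r%:R + f a) w M * bp (r%:R - f a) 1 M)`_r.
    rewrite coefM; apply: eq_bigr => i _.
    have iM : (i < M)%N by rewrite /M ltnS leq_ord.
    have kiM : (r - i < M)%N by rewrite /M ltnS leq_subr.
    by rewrite !coef_poly iM kiM expr1n mulr1.
  rewrite e1.
  have ep : r%:R + f a = (1 + f a) + n%:R :> K by rewrite rn mulrSr; ring.
  have em : r%:R - f a = (1 - f a) + n%:R :> K by rewrite rn mulrSr; ring.
  rewrite ep em.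
  have h := eqt_mul (eqt_sym (@bp_add _ M (1 + f a) n%:R w))
                    (eqt_sym (@bp_add _ M (1 - f a) n%:R 1)).
  rewrite h; last by rewrite /M.
  suff -> : bp (1 + f a) w M * bp n%:R w M * (bp (1 - f a) 1 M * bp n%:R 1 M) = V * H by [].
  by rewrite /V /H; ring.
rewrite eS coefM.
have hH : forall k, (k < M)%N -> `|H`_k| <= 4.
  move=> k kM; rewrite coefM.
  apply: le_trans (ler_norm_sum _ _ _) _.
  apply: le_trans (_ : \sum_(j < k.+1) `|gb (1 + f a) j| <= 4).
    apply: ler_sum => j _.
    have jM : (j < M)%N by exact: leq_ltn_trans (leq_ord j) kM.
    have kjM : (k - j < M)%N by exact: leq_ltn_trans (leq_subr j k) kM.
    rewrite !coef_poly jM kjM expr1n mulr1 !normrM normrX w1 expr1n mulr1.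
    rewrite -[X in _ <= X]mulr1; apply: ler_pM; rewrite ?normr_ge0 //.
    have := f_le (gb_1ma a0 a1 (k - j)).
    by rewrite rmorph1 -f_norm -gb_f rmorphB rmorph1.
  rewrite (eq_bigr (fun j : 'I_k.+1 => f `|gb (1 + a) j|)); last first.
    by move=> j _; rewrite -f_norm -gb_f rmorphD rmorph1.
  rewrite -rmorph_sum -[4](rmorph_nat f); apply: f_le; exact: sum_gb_1pa.
apply: le_trans (ler_norm_sum _ _ _) _.
apply: le_trans (_ : \sum_(i < r.+1) `|V`_i| * 4 <= _).
  apply: ler_sum => i _; rewrite normrM; apply: ler_pM; rewrite ?normr_ge0 //.
  by apply: hH; rewrite /M ltnS leq_subr.
rewrite -big_distrl /= mulrC; apply: ler_pM.
- by [].
- by apply: sumr_ge0 => i _; rewrite normr_ge0.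
- by [].
have eV : eqt M V (((1 + w *: 'X) * (1 + 1 *: 'X)) ^+ n).
  by rewrite exprMn; apply: eqt_mul; apply: bp_nat.
rewrite (eq_bigr (fun i : 'I_r.+1 => `|(((1 + w *: 'X) * (1 + 1 *: 'X)) ^+ n)`_i|)); last first.
  by move=> i _; rewrite eV // /M ltnS leq_ord.
apply: le_trans (sum_le_Nrm _ _) _.
by rewrite -(NrmQ w1); apply: Nrm_exp.
Qed.
End Core.

Definition K := (R : rcfType)[i].
Definition phi (z : C) : K := Complex (fst z) (snd z).

Lemma phi_add x y : phi (Cplus x y) = phi x + phi y.
Proof. by case: x; case: y. Qed.
Lemma phi_plus x y : phi (plus x y) = phi x + phi y.
Proof. by case: x; case: y. Qed.
Lemma phi_mul x y : phi (Cmult x y) = phi x * phi y.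
Proof. by case: x; case: y. Qed.
Lemma phi_opp x : phi (Copp x) = - phi x.
Proof. by case: x. Qed.
Lemma phi_RtoC x : phi (RtoC x) = x%:C.
Proof. by []. Qed.
Lemma phi_inv x : phi (Cinv x) = (phi x)^-1.
Proof.
case: x => a b; rewrite /phi /Cinv /=.
change ((a +i* b)^-1) with ((a / (a^+2 + b^+2)) -i* (b / (a^+2 + b^+2))).
rewrite !RdivE (_ : Rplus (Rmult a (Rmult a (IZR 1))) (Rmult b (Rmult b (IZR 1))) = a ^+ 2 + b ^+ 2).
  by rewrite RoppE mulNr.
by rewrite !RmultE RplusE R1E !mulr1 !expr2.
Qed.

Lemma phi_div x y : phi (Cdiv x y) = phi x / phi y.
Proof. by rewrite /Cdiv phi_mul phi_inv. Qed.

Lemma phi_minus x y : phi (Cminus x y) = phi x - phi y.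
Proof. by rewrite /Cminus phi_add phi_opp. Qed.

Lemma phi_pow x k : phi (Cpow x k) = phi x ^+ k.
Proof.
elim: k => [|k IH]; first by [].
by rewrite /= phi_mul IH exprS.
Qed.

Lemma phi_sum f r : phi (sum_n f r) = \sum_(s < r.+1) phi (f s).
Proof.
elim: r => [|r IH]; first by rewrite sum_O big_ord1; reflexivity.

by rewrite Hierarchy.sum_Sn phi_plus IH [in RHS]big_ord_recr.
Qed.

Lemma phi_nat k : phi (RtoC (INR k)) = k%:R.
Proof. by rewrite phi_RtoC INRE rmorph_nat. Qed.

Lemma phi_poch y s : phi (poch y s) = rf (phi y) s.
Proof.
elim: s => [|s IH]; first by rewrite rf0.
by rewrite /= phi_mul phi_add IH phi_nat rfS.
Qed.

Lemma rpoch_rf y s : (rpoch y s)%:C = rf (y%:C) s :> K.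
Proof.
elim: s => [|s IH]; first by rewrite rf0.
by rewrite /= rfS -IH RmultE RplusE INRE rmorphM rmorphD rmorph_nat.
Qed.

Lemma fact_eq s : Factorial.fact s = s`!.
Proof. by elim: s => // s IH; rewrite /= IH factS. Qed.

Lemma normC_phi z : `|phi z| = (Cmod z)%:C.
Proof.
case: z => a b; rewrite normc_def /Cmod RsqrtE !RpowE RplusE.
done.
Qed.

Lemma lecR' (x y : R) : (x%:C <= y%:C :> K) = (x <= y).
Proof. exact: lecR. Qed.

Lemma normR (x : R) : `|x%:C : K| = `|x|%:C.
Proof. by rewrite normc_def /= expr0n /= addr0 sqrtr_sqr. Qed.

Lemma cR_div (x y : R) : (x / y)%:C = x%:C / y%:C :> K. Proof. exact: fmorph_div. Qed.
Lemma cR_sub (x y : R) : (x - y)%:C = x%:C - y%:C :> K. Proof. exact: rmorphB. Qed.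
Lemma cR_add (x y : R) : (x + y)%:C = x%:C + y%:C :> K. Proof. exact: rmorphD. Qed.
Lemma cR_mul (x y : R) : (x * y)%:C = x%:C * y%:C :> K. Proof. exact: rmorphM. Qed.
Lemma cR_exp (x : R) k : (x ^+ k)%:C = x%:C ^+ k :> K. Proof. exact: rmorphXn. Qed.
Lemma cR_nat k : (k%:R : R)%:C = k%:R :> K. Proof. exact: rmorph_nat. Qed.
Lemma cR1 : (1 : R)%:C = 1 :> K. Proof. exact: rmorph1. Qed.

Lemma f_le (x y : R) : x <= y -> x%:C <= y%:C :> K.
Proof. by rewrite lecR'. Qed.

Lemma phi_Xnr n r X :
  phi (Xnr n r X) = \sum_(s < r.+1)
    (rf (- r%:R) s * rf (- r%:R - (1 / n%:R)%:C) s
      / (rf (1 - (1 / n%:R)%:C) s * s`!%:R)) * phi X ^+ s.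
Proof.
rewrite /Xnr phi_sum; apply: eq_bigr => s _.
rewrite phi_mul phi_div !phi_mul !phi_poch phi_minus phi_opp phi_minus !phi_RtoC phi_pow.
by rewrite RdivE R1E !INRE fact_eq !rmorph_nat rmorph1.
Qed.

Lemma core_C (n r : nat) (X : C) :
  (2 <= n)%coq_nat -> (1 <= r)%coq_nat -> Cmod X = IZR 1 ->
  Rle (Cmod (Xnr n r X))
      (Rmult (Rmult (IZR 4) (gamma_ratio n r))
             (pow (Rplus (IZR 2) (Cmod (Cplus (RtoC (IZR 1)) X))) (Nat.pred r))).
Proof.
move=> /ssrnat.leP hn /ssrnat.leP hr hX.
set a : R := 1 / n%:R.
have n0 : (0 : R) < n%:R by rewrite ltr0n; apply: leq_trans hn.
have a0 : 0 < a by rewrite /a divr_gt0.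
have a1 : a < 1.
  by rewrite /a ltr_pdivrMr // mul1r ltr1n.
set fa : K := a%:C.
set W := phi X.
have w1 : `|W| = 1 by rewrite /W normC_phi hX R1E rmorph1.
set g : K := r`!%:R / rf (1 - fa) r.
have hfa : 0 < 1 - fa.
  have -> : 1 - fa = (1 - a)%:C by rewrite /fa rmorphB rmorph1.
  by rewrite ltcR subr_gt0.
have key : phi (Xnr n r X) =
    g * \sum_(s < r.+1) gb (r%:R + fa) s * W ^+ s * gb (r%:R - fa) (r - s).
  rewrite phi_Xnr big_distrr; apply: eq_bigr => s _.
  rewrite (coef_id hfa); last by rewrite -ltnS ltn_ord.
  rewrite /g /W /=; ring.
have hg : g = (gamma_ratio n r)%:C.
  rewrite /g /gamma_ratio RdivE cR_div rpoch_rf INRE fact_eq cR_nat.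
  by rewrite RminusE RdivE R1E INRE cR_sub cR1.
have g0 : 0 <= g.
  by rewrite /g divr_ge0 ?ler0n // ltW // rf_gt0.
set G := gamma_ratio n r.
set Cm := Cmod (Cplus (RtoC (IZR 1)) X).
have e4 : IZR 4 = 4%:R by rewrite IZRposE INRE.
have e2 : IZR 2 = 2%:R by rewrite IZRposE INRE.
rewrite e4 e2 RpowE !RmultE RplusE.
apply/RleP; rewrite -lecR' !cR_mul cR_exp cR_add !cR_nat.
rewrite -normC_phi key normrM (ger0_norm g0) hg.
have eC : Cm%:C = `|1 + W| by rewrite /Cm -normC_phi phi_add phi_RtoC R1E cR1.
rewrite eC [4%:R * _]mulrC -mulrA; apply: ler_pM.
- by rewrite -hg.
- exact: normr_ge0.
- by rewrite /gamma_ratio /Rdiv RmultE cR_mul.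
have h := core normR f_le a0 a1 hr w1.
exact: h.

Qed.
End Core.

Unset Implicit Arguments.

From Stdlib Require Import Lra Lia Psatz.

Open Scope C_scope.

Lemma rpoch_pos (y : R) (k : nat) : (0 < y)%R -> (0 < rpoch y k)%R.
Proof.
intros hy; induction k as [|k IH]; simpl; [lra|].
apply Rmult_lt_0_compat; [exact IH|]. pose proof (pos_INR k); lra.
Qed.

Lemma gamma_pos (n r : nat) : (2 <= n)%nat -> (0 <= gamma_ratio n r)%R.
Proof.
intros hn; unfold gamma_ratio.
assert (h2 : (2 <= INR n)%R) by (replace 2%R with (INR 2) by (simpl; ring); apply le_INR; lia).
assert (h : (0 < 1 - 1 / INR n)%R).
{ assert (1 / INR n <= 1/2)%R by (apply Rmult_le_compat_l; [lra| apply Rinv_le_contravar; lra]). lra. }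
apply Rmult_le_pos; [apply pos_INR|]. left; apply Rinv_0_lt_compat, rpoch_pos, h.
Qed.

Lemma gen_bound (n r : nat) (X Y : C) (Q : R) :
  (2 <= n)%nat -> (1 <= r)%nat -> Cmod (X / Y) = 1%R ->
  (2 + Cmod (1 + X / Y) <= Q)%R ->
  (Cmod (Xstar n r X Y) <= 4 * Cmod Y ^ r * gamma_ratio n r * Q ^ (pred r))%R.
Proof.
intros hn hr h1 hQ.
unfold Xstar. rewrite Cmod_mult, Cmod_pow.
pose proof (@Core.core_C n r (X / Y) hn hr h1) as hc.
pose proof (gamma_pos n r hn) as hg.
assert (hB : (0 <= 2 + Cmod (1 + X / Y))%R) by (pose proof (Cmod_ge_0 (1 + X / Y)); lra).
assert (hp : ((2 + Cmod (1 + X / Y)) ^ pred r <= Q ^ pred r)%R) by (apply pow_incr; lra).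
assert (hu : (0 <= Cmod Y ^ r)%R) by (apply pow_le, Cmod_ge_0).
assert (hX : (0 <= Cmod (Xnr n r (X / Y)))%R) by apply Cmod_ge_0.
apply Rle_trans with (Cmod Y ^ r * (4 * gamma_ratio n r * (2 + Cmod (1 + X / Y)) ^ pred r))%R.
- apply Rmult_le_compat_l; assumption.
- replace (4 * Cmod Y ^ r * gamma_ratio n r * Q ^ pred r)%R
    with (Cmod Y ^ r * (4 * gamma_ratio n r * Q ^ pred r))%R by ring.
  apply Rmult_le_compat_l; [assumption|].
  apply Rmult_le_compat_l; [lra|assumption].
Qed.

Theorem lemma2p6 (n r : nat) (u z : C) (phi : R) :
  (2 <= n)%nat -> (1 <= r)%nat -> u <> 0%C ->
  (0 < phi < PI)%R -> (z / u)%C = expi phi ->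
  (Cmod (Xstar n r z u)
     <= 4 * Cmod u ^ r * gamma_ratio n r * Cmod (1 + expi (phi / 2))%C ^ (2 * r - 2))%R
  /\
  (Cmod (Xstar n r u z)
     <= 4 * Cmod z ^ r * gamma_ratio n r * Cmod (1 + expi (phi / 2))%C ^ (2 * r - 2))%R.
Proof.
intros hn hr hu hphi hw.
set (c := cos (phi / 2)). set (s := sin (phi / 2)).
assert (hcs : (c * c + s * s = 1)%R).
{ pose proof (sin2_cos2 (phi / 2)) as e. unfold Rsqr in e. unfold c, s. lra. }
assert (hc0 : (0 <= c)%R) by (unfold c; apply cos_ge_0; lra).
assert (hcos : cos phi = (c * c - s * s)%R).
{ unfold c, s. rewrite <- cos_2a. f_equal. field. }
assert (hsin : sin phi = (2 * s * c)%R).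
{ unfold c, s. rewrite <- sin_2a. f_equal. field. }
assert (hV : (Cmod (1 + expi (phi / 2)) ^ 2 = 2 + 2 * c)%R).
{ unfold Cmod, expi. rewrite pow2_sqrt.
  - simpl. fold c s. nra.
  - simpl. pose proof (Rle_0_sqr (1 + cos (phi / 2))) as q1.
    pose proof (Rle_0_sqr (0 + sin (phi / 2))) as q2. unfold Rsqr in q1, q2. lra. }
clearbody c s.
assert (hw1 : Cmod (z / u) = 1%R).
{ rewrite hw. unfold Cmod, expi. simpl.
  replace (cos phi * (cos phi * 1) + sin phi * (sin phi * 1))%R with 1%R.
  - apply sqrt_1.
  - pose proof (sin2_cos2 phi) as e. unfold Rsqr in e. lra. }
assert (hm : Cmod (1 + z / u) = (2 * c)%R).
{ rewrite hw. unfold Cmod, expi. simpl.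
  rewrite <- (sqrt_pow2 (2 * c)) by lra. f_equal.
  rewrite hcos, hsin.
  assert (hs2 : (s * s = 1 - c * c)%R) by lra.
  transitivity ((1 + c * c - s * s) ^ 2 + 4 * (s * s) * (c * c))%R; [ring|].
  rewrite hs2. ring. }
assert (hpow : forall x : R, (x ^ (2 * r - 2) = (x ^ 2) ^ pred r)%R).
{ intros x. rewrite <- pow_mult. f_equal. lia. }
assert (hz : z <> 0).
{ intros ez. rewrite ez in hw1. unfold Cdiv in hw1. rewrite Cmult_0_l, Cmod_0 in hw1. lra. }
split.
- rewrite hpow, hV. apply gen_bound; auto. rewrite hm. lra.
- rewrite hpow, hV. apply gen_bound; auto.
  + assert (e : u / z = / (z / u)) by (field; auto).
    rewrite e, Cmod_inv, hw1. apply Rinv_1.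
    intros e0. rewrite e0, Cmod_0 in hw1. lra.
  + assert (e : 1 + u / z = (1 + z / u) / (z / u)) by (field; auto).
    rewrite e, Cmod_div, hw1, hm. lra.
    intros e0. rewrite e0, Cmod_0 in hw1. lra.
Qed.
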